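(* For $n\ge 1$, $\left|\Pi_n\wr C_2(1^12^1,1^22^1)\right|=2^n+n-1$.
   Context: For $n\ge0$ let $[n]=\{1,\dots,n\}$. A $2$-colored set partition of $[n]$ is a set partition of $[n]$ together with an assignment of a color from $\{1,2\}$ to each element; $\Pi_n\wr C_2$ is the set of these. For a set $S$ of patterns, $\Pi_n\wr C_2(S)$ is the set of such colored partitions avoiding every pattern in $S$ in the pattern sense. For the two patterns used here: $\sigma$ contains $1^12^1$ iff there are two elements in different blocks with the same color; $\sigma$ contains $1^22^1$ iff there are $i<j$ in different blocks with $i$ colored $2$ and $j$ colored $1$. *)

(* Defs.v *)
From mathcomp Require Import all_boot.
Set Implicit Arguments. Unset Strict Implicit. Unset Printing Implicit Defensive.

(* The ground set [n] = {1,...,n} is modelled by 'I_n = {0,...,n-1}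
   (element k+1 of [n] is the ordinal with value k; order is preserved). *)

Definition color1 : 'I_2 := ord0.
Definition color2 : 'I_2 := ord_max.

Definition colored_partition (n : nat) :=
  ({set {set 'I_n}} * {ffun 'I_n -> 'I_2})%type.

Definition is_colored_partition n (s : colored_partition n) : bool :=
  partition s.1 [set: 'I_n].

Definition contains_1121 n (s : colored_partition n) : bool :=
  [exists i : 'I_n, exists j : 'I_n,
     (pblock s.1 i != pblock s.1 j) && (s.2 i == s.2 j)].

Definition contains_1221 n (s : colored_partition n) : bool :=
  [exists i : 'I_n, exists j : 'I_n,
     [&& (i < j)%N, pblock s.1 i != pblock s.1 j,
         s.2 i == color2 & s.2 j == color1]].

Definition avoiders n : {set colored_partition n} :=
  [set s : colored_partition n | [&& is_colored_partition s,
                                     ~~ contains_1121 s & ~~ contains_1221 s]].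

(* Main.v *)
Require Import Defs.
From mathcomp Require Import all_boot zify.
Set Implicit Arguments. Unset Strict Implicit. Unset Printing Implicit Defensive.

Definition Ak n (k : nat) : {set 'I_n} := [set i : 'I_n | (i < k)%N].
Definition Bk n (k : nat) : {set 'I_n} := [set i : 'I_n | (k <= i)%N].
Definition Pk n k : {set {set 'I_n}} := [set Ak n k; Bk n k].
Definition colk n k : {ffun 'I_n -> 'I_2} :=
  [ffun i : 'I_n => if (i < k)%N then color1 else color2].

Lemma Pk_triv n k : trivIset (Pk n k).
Proof.
apply/trivIsetP => A B /set2P[]-> /set2P[]-> //; rewrite ?eqxx // => _;
  rewrite -setI_eq0; apply/eqP/setP => x; rewrite !inE; apply/negbTE; lia.
Qed.

Lemma Pk_partition n (k : 'I_n) : (0 < k)%N -> partition (Pk n k) [set: 'I_n].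
Proof.
move=> k0; apply/and3P; split; [|exact: Pk_triv|].
- apply/eqP/setP => x; rewrite inE; apply/bigcupP.
  case: (ltnP x k) => h.
  + by exists (Ak n k); rewrite !inE ?eqxx ?h.
  + by exists (Bk n k); rewrite !inE ?eqxx ?h ?orbT.
- apply/negP => /set2P[] /setP H.
  + by have := H (Ordinal (ltn_trans k0 (ltn_ord k))); rewrite /Ak !inE /= k0.
  + by have := H k; rewrite /Bk !inE /= leqnn.
Qed.

Lemma pblock_Pk n k (i : 'I_n) :
  pblock (Pk n k) i = if (i < k)%N then Ak n k else Bk n k.
Proof.
apply: def_pblock; first exact: Pk_triv.
  by case: ifP; rewrite !inE eqxx ?orbT.
by case: ifP => h; rewrite inE ?h // leqNgt h.
Qed.

Lemma S2_avoid n (k : 'I_n) : (0 < k)%N ->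
  ((Pk n k, colk n k) : colored_partition n) \in avoiders n.
Proof.
move=> k0; rewrite inE /is_colored_partition /= Pk_partition //=.
apply/andP; split.
- apply/existsP => -[i /existsP[j /andP[]]].
  rewrite !pblock_Pk !ffunE.
  by case: (ltnP i k); case: (ltnP j k); rewrite ?eqxx.
- apply/existsP => -[i /existsP[j /and4P[ij]]].
  rewrite !ffunE.
  case: (ltnP i k) => hi; case: (ltnP j k) => hj //; lia.
Qed.

Lemma S1_avoid n (c : {ffun 'I_n -> 'I_2}) : (0 < n)%N ->
  ((([set [set: 'I_n]], c)) : colored_partition n) \in avoiders n.
Proof.
move=> n0; rewrite inE /is_colored_partition /=.
have Hp : forall i : 'I_n, pblock [set [set: 'I_n]] i = [set: 'I_n].
  by move=> i; apply: def_pblock; rewrite ?trivIset1 ?inE.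
apply/and3P; split.
- apply/and3P; split; rewrite ?cover1 ?trivIset1 //.
  apply/negP; rewrite inE => /eqP/setP H.
  by have := H (Ordinal n0); rewrite !inE.
- by apply/existsP => -[i /existsP[j]]; rewrite !Hp eqxx.
- by apply/existsP => -[i /existsP[j]]; rewrite !Hp eqxx /= andbF.
Qed.

Lemma two_col (a b d : 'I_2) : a != d -> b != d -> a = b.
Proof. case: a b d => [a pa] [b pb] [d pd]; rewrite -!val_eqE /= => h1 h2; apply: val_inj => /=; lia. Qed.

Lemma col12 (a : 'I_2) : a != color2 -> a = color1.
Proof. by move=> h; apply: (two_col h). Qed.

Lemma avoid_char n (s : colored_partition n) : (0 < n)%N -> s \in avoiders n ->
  s.1 = [set [set: 'I_n]] \/ exists2 k : 'I_n, (0 < k)%N & s = (Pk n k, colk n k).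
Proof.
case: s => P c n0; rewrite inE /is_colored_partition /= => /and3P[Hp H1 H2].
have H1' : forall i j, pblock P i != pblock P j -> c i != c j.
  move=> i j h; apply/negP => /eqP e; move/negP: H1; apply.
  by apply/existsP; exists i; apply/existsP; exists j; rewrite h e eqxx.
have H2' : forall i j : 'I_n, (i < j)%N -> pblock P i != pblock P j ->
    c i = color2 -> c j = color1 -> False.
  move=> i j ij h ci cj; move/negP: H2; apply.
  by apply/existsP; exists i; apply/existsP; exists j; rewrite ij h ci cj !eqxx.
have cov : cover P = [set: 'I_n] by apply: cover_partition.
have tri : trivIset P by apply: (partition_trivIset Hp).
have inc : forall x : 'I_n, x \in cover P by move=> x; rewrite cov inE.
set x0 : 'I_n := Ordinal n0.
have blk : forall X, X \in P -> exists x, X = pblock P x.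
  move=> X XP; have /set0Pn[x xX] := partition_neq0 Hp XP.
  by exists x; rewrite (def_pblock tri XP xX).
case: (boolP [forall i, pblock P i == pblock P x0]) => [/forallP all|].
  left.
  have eT : pblock P x0 = [set: 'I_n].
    apply/setP => y; rewrite inE -(eqP (all y)) mem_pblock; exact: inc.
  apply/setP => X; rewrite inE; apply/idP/eqP.
  - by case/blk => x ->; rewrite (eqP (all x)).
  - by move=> ->; rewrite -eT pblock_mem.
rewrite negb_forall => /existsP[u hu].
right.
have key : forall i j, (pblock P i == pblock P j) = (c i == c j).
  move=> i j; apply/idP/idP => [/eqP e|]; last first.
    by apply: contraLR => /H1'.
  apply/eqP.
  case: (eqVneq (pblock P i) (pblock P u)) => [e2|ne].
    have ne0 : pblock P i != pblock P x0 by rewrite e2.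
    by apply: (two_col (H1' _ _ ne0)); apply: H1'; rewrite -e.
  by apply: (two_col (H1' _ _ ne)); apply: H1'; rewrite -e.
have mono : forall i j : 'I_n, (i < j)%N -> c i = color2 -> c j = color1 -> False.
  move=> i j ij ci cj; apply: (H2' i j ij) => //.
  by rewrite key ci cj.
have cu := H1' _ _ hu.
have [w cw] : exists w, c w == color2.
  case: (eqVneq (c u) color2) => h; first by exists u; rewrite h.
  exists x0; case: (eqVneq (c x0) color2) => // h0; move: cu.
  by rewrite (col12 h) (col12 h0).
have [v cv] : exists v, c v = color1.
  case: (eqVneq (c u) color2) => h; last by exists u; apply: col12.
  exists x0; apply: col12; by rewrite -h eq_sym.
case: (@arg_minnP _ w (fun i => c i == color2) (fun i : 'I_n => nat_of_ord i) cw) => k ck kmin.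
have cform : forall i : 'I_n, c i = if (i < k)%N then color1 else color2.
  move=> i; case: ifP => ik.
    apply: col12; apply/negP => /kmin; lia.
  case: (eqVneq (c i) color2) => // h.
  case: (ltngtP k i) => [ki||ki]; first by case: (mono _ _ ki (eqP ck) (col12 h)).
    by rewrite ik.
  have e : k = i by apply: val_inj.
  by move: h; rewrite -e (eqP ck) eqxx.
have k0 : (0 < k)%N.
  have := cform v; rewrite cv; case: ifP => [vk _|//]; lia.
exists k => //.
have pb : forall x, pblock P x = if (x < k)%N then Ak n k else Bk n k.
  move=> x; apply/setP => y; rewrite -eq_pblock // key !cform.
  case: (ltnP x k) => hx; case: (ltnP y k) => hy; rewrite !inE ?hx ?hy //=; rewrite ?ltnNge ?hy // ?hx //; apply/esym/negbTE; rewrite -ltnNge //.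
f_equal.
  apply/setP => X; apply/idP/idP.
  - by case/blk => x ->; rewrite pb; case: ifP; rewrite !inE eqxx ?orbT.
  - case/set2P => ->.
      have : Ak n k = pblock P x0 by rewrite pb /= k0.
      by move=> ->; rewrite pblock_mem.
    have : Bk n k = pblock P k by rewrite pb ltnn.
    by move=> ->; rewrite pblock_mem.
by apply/ffunP => i; rewrite ffunE cform.
Qed.

Definition S1 n : {set colored_partition n} :=
  [set (([set [set: 'I_n]], c) : colored_partition n) | c : {ffun 'I_n -> 'I_2}].
Definition S2 n : {set colored_partition n} :=
  [set ((Pk n (nat_of_ord k), colk n (nat_of_ord k)) : colored_partition n) | k in [set k : 'I_n | (0 < k)%N]].

Lemma avoid_eq n : (0 < n)%N -> avoiders n = S1 n :|: S2 n.
Proof.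
move=> n0; apply/setP => s; rewrite in_setU; apply/idP/orP.
- move/(avoid_char n0) => [e|[k k0 ->]].
  + left; apply/imsetP; exists s.2 => //; by case: s e => P c /= ->.
  + by right; apply/imsetP; exists k; rewrite ?inE.
- case => /imsetP[x].
  + by move=> _ ->; apply: S1_avoid.
  + by rewrite inE => x0 ->; apply: S2_avoid.
Qed.

Lemma colk_inj n : injective (fun k : 'I_n => colk n k).
Proof.
move=> a b /ffunP e; apply: val_inj.
case: (ltngtP a b) => // h; [have := e a | have := e b];
  by rewrite !ffunE ltnn h.
Qed.

Theorem mainTheorem2 (n : nat) : (1 <= n)%N ->
  #|avoiders n| = (2 ^ n + n - 1)%N.
Proof.
case: n => [//|m] _.
rewrite avoid_eq // cardsU.
have -> : S1 m.+1 :&: S2 m.+1 = set0.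
  apply/setP => s; rewrite !inE; apply/negbTE/negP => /andP[/imsetP[c _ ->]].
  case/imsetP => k; rewrite inE => k0 [e _].
  have : Ak m.+1 k \in [set [set: 'I_m.+1]] by rewrite e !inE eqxx.
  by rewrite inE => /eqP/setP/(_ k); rewrite !inE ltnn.
rewrite cards0 subn0.
rewrite card_imset; last by move=> a b [].
rewrite card_imset; last by move=> a b [] _ /colk_inj.
have -> : [set k : 'I_m.+1 | (0 < k)%N] = [set~ ord0].
  by apply/setP => k; rewrite !inE -val_eqE /= lt0n.
rewrite cardsC1 card_ffun !card_ord.
have := expn_gt0 2 m.+1; lia.
Qed.
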